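(* Let $S$ be an atomic base, let $\Gamma = x_1:A_1,\dots,x_n:A_n$ be a context and let $t$ be a term with $tFV(t)\subseteq\{x_1,\dots,x_n\}$. If the term $t$ of $A$ from $\Gamma$ is E-valid (with respect to $S$), then there is a normal proof-term $s$ (with respect to $S$) such that $t\twoheadrightarrow s$ and $\Gamma\vdash s:A$ is derivable in $\mathbf{IL}_{\mathbf{at}}$.
   Context: System $\mathbf{IL}_{\mathbf{at}}$ (atomic second-order intuitionistic propositional logic). Formulas: $A,B ::= X \mid A\to B \mid \forall X.A$, where $X$ ranges over atoms (propositional variables). Terms: $t,s ::= x \mid c^A \mid \lambda x.t \mid ts \mid \Lambda X.t \mid tX$, where $x$ ranges over term-variables, $c^A$ is a term-constant for each formula $A$, and in $tX$ the argument is an atom. Terms and formulas are taken up to $\alpha$-equivalence; $t[x:=s]$, $t[X:=Y]$, $A[X:=B]$ are capture-avoiding substitutions; $t[\vec{t_i}]$ denotes the simultaneous substitution $t[x_1:=t_1,\dots,x_n:=t_n]$. $tFV(t)$ is the set of free term-variables of $t$, $FV(t)$ the set of free term- and propositional variables. A term is closed if it has no free term-variable. A context is a finite set $x_1:A_1,\dots,x_n:A_n$ with distinct term-variables; $PFV(\Gamma)$ is the set of propositional variables free in $A_1,\dots,A_n$. $\Gamma\vdash t:A$ is derivable if generated by: $\Gamma,x:A\vdash x:A$; $\Gamma\vdash c^A:A$; from $\Gamma,x:A\vdash t:B$ infer $\Gamma\vdash\lambda x.t:A\to B$; from $\Gamma\vdash t:A\to B$ and $\Gamma\vdash s:A$ infer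 $\Gamma\vdash ts:B$; from $\Gamma\vdash t:A$ with $X\notin PFV(\Gamma)$ infer $\Gamma\vdash\Lambda X.t:\forall X.A$; from $\Gamma\vdash t:\forall X.A$ infer $\Gamma\vdash tY:A[X:=Y]$ for any atom $Y$. $\beta$-reduction $\to_\beta$: $(\lambda x.t)s\to_\beta t[x:=s]$, $(\Lambda X.t)Y\to_\beta t[X:=Y]$, closed under taking subterms in any position (application function/argument, under $\lambda$ and under $\Lambda$). A term is normal if it contains no redex (left-hand side of these two rules). $\twoheadrightarrow$ is the reflexive-transitive closure of $\to_\beta$. An atomic base $S$ is a set of term-constants $c^X$ for atoms $X$. A proof-term is a term in which no term-constant occurs other than those $c^X\in S$. qE-validity: (1) a closed term $t$ of an atom $X$ is qE-valid iff $t\twoheadrightarrow s$ for some normal $s$ with $\vdash s:X$ derivable; (2) a closed term $t$ of $B\to C$ is qE-valid iff $ts$ of $C$ is qE-valid for every qE-valid closed term $s$ of $B$; (3) a closed term $t$ of $\forall X.A$ is qE-valid iff $tY$ of $A[X:=Y]$ is qE-valid for every atom $Y$; (4) a term $t$ of $A$ from $x_1:A_1,\dots,x_n:A_n$ with $tFV(t)\subseteq\{x_1,\dots,x_n\}$ is qE-valid iff $t[\vec{t_i}]$ of $A$ is qE-valid for all qE-valid closed terms $t_i$ of $A_i$ ($1\le i\le n$). A term is E-valid iff it is a proof-term and qE-valid. *)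

(* Defs.v *)
(* System IL_at in de Bruijn representation (terms and
   formulas up to alpha-equivalence). *)
From Stdlib Require Import List Arith.
Import ListNotations.

(** Formulas: atoms are de Bruijn indices; [All A] binds index 0 in [A]. *)
Inductive form : Type :=
| Atom : nat -> form
| Imp  : form -> form -> form
| All  : form -> form.

(** Terms (Curry-style): [Var n] is a de Bruijn term variable, [Cst A] is the
    constant c^A, [Lam] binds term-variable 0, [TLam] binds atom 0,
    [TApp t Y] is t applied to the atom Y. *)
Inductive term : Type :=
| Var  : nat -> term
| Cst  : form -> term
| Lam  : term -> term
| App  : term -> term -> term
| TLam : term -> term
| TApp : term -> nat -> term.

Definition up (f : nat -> nat) : nat -> nat :=
  fun k => match k with 0 => 0 | S k => S (f k) end.

Definition scons (Y : nat) (f : nat -> nat) : nat -> nat :=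
  fun k => match k with 0 => Y | S k => f k end.

Definition inst (Y : nat) : nat -> nat := scons Y (fun k => k).

Fixpoint fren (f : nat -> nat) (A : form) : form :=
  match A with
  | Atom n => Atom (f n)
  | Imp A B => Imp (fren f A) (fren f B)
  | All A => All (fren (up f) A)
  end.

Fixpoint tren (f : nat -> nat) (t : term) : term :=
  match t with
  | Var n => Var n
  | Cst A => Cst (fren f A)
  | Lam t => Lam (tren f t)
  | App t s => App (tren f t) (tren f s)
  | TLam t => TLam (tren (up f) t)
  | TApp t n => TApp (tren f t) (f n)
  end.

Fixpoint vren (f : nat -> nat) (t : term) : term :=
  match t with
  | Var n => Var (f n)
  | Cst A => Cst A
  | Lam t => Lam (vren (up f) t)
  | App t s => App (vren f t) (vren f s)
  | TLam t => TLam (vren f t)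
  | TApp t n => TApp (vren f t) n
  end.

Fixpoint tsub (sigma : nat -> term) (t : term) : term :=
  match t with
  | Var n => sigma n
  | Cst A => Cst A
  | Lam t => Lam (tsub (fun n => match n with
                                 | 0 => Var 0
                                 | S n => vren S (sigma n) end) t)
  | App t s => App (tsub sigma t) (tsub sigma s)
  | TLam t => TLam (tsub (fun n => tren S (sigma n)) t)
  | TApp t n => TApp (tsub sigma t) n
  end.

Definition subst1 (s : term) : nat -> term :=
  fun n => match n with 0 => s | S n => Var n end.

Inductive step : term -> term -> Prop :=
| step_beta : forall t s, step (App (Lam t) s) (tsub (subst1 s) t)
| step_tbeta : forall t Y, step (TApp (TLam t) Y) (tren (inst Y) t)
| step_lam : forall t t', step t t' -> step (Lam t) (Lam t')
| step_appl : forall t t' s, step t t' -> step (App t s) (App t' s)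
| step_appr : forall t s s', step s s' -> step (App t s) (App t s')
| step_tlam : forall t t', step t t' -> step (TLam t) (TLam t')
| step_tapp : forall t t' Y, step t t' -> step (TApp t Y) (TApp t' Y).

Inductive star : term -> term -> Prop :=
| star_refl : forall t, star t t
| star_step : forall t u v, step t u -> star u v -> star t v.

Fixpoint normal (t : term) : Prop :=
  match t with
  | Var _ | Cst _ => True
  | Lam t => normal t
  | App t s => match t with Lam _ => False | _ => True end /\ normal t /\ normal s
  | TLam t => normal t
  | TApp t _ => match t with TLam _ => False | _ => True end /\ normal t
  end.

Fixpoint fvbound (k : nat) (t : term) : Prop :=
  match t with
  | Var n => n < k
  | Cst _ => True
  | Lam t => fvbound (S k) t
  | App t s => fvbound k t /\ fvbound k s
  | TLam t => fvbound k t
  | TApp t _ => fvbound k t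
  end.

Definition closed (t : term) : Prop := fvbound 0 t.

(** Typing. A context is a list of formulas; [Var i] refers to the i-th
    entry. The side condition X \notin PFV(Gamma) of the Lambda-rule is the
    de Bruijn shift of the context. *)
Inductive typed : list form -> term -> form -> Prop :=
| ty_var : forall G n A, nth_error G n = Some A -> typed G (Var n) A
| ty_cst : forall G A, typed G (Cst A) A
| ty_lam : forall G t A B, typed (A :: G) t B -> typed G (Lam t) (Imp A B)
| ty_app : forall G t s A B,
    typed G t (Imp A B) -> typed G s A -> typed G (App t s) B
| ty_tlam : forall G t A,
    typed (map (fren S) G) t A -> typed G (TLam t) (All A)
| ty_tapp : forall G t A Y,
    typed G t (All A) -> typed G (TApp t Y) (fren (inst Y) A).

(** qE-validity of a closed term t of the formula [fren rho A]
    (the renaming rho keeps the recursion structural on A). *)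
Fixpoint qev (A : form) (rho : nat -> nat) (t : term) : Prop :=
  match A with
  | Atom X => closed t /\
      exists s, star t s /\ normal s /\ typed nil s (Atom (rho X))
  | Imp A B => closed t /\ forall s, qev A rho s -> qev B rho (App t s)
  | All A => closed t /\ forall Y, qev A (scons Y rho) (TApp t Y)
  end.

Definition qE_valid_closed (A : form) (t : term) : Prop := qev A (fun k => k) t.

Definition qE_valid (G : list form) (t : term) (A : form) : Prop :=
  fvbound (length G) t /\
  forall sigma : nat -> term,
    (forall i Ai, nth_error G i = Some Ai -> qE_valid_closed Ai (sigma i)) ->
    qE_valid_closed A (tsub sigma t).

(** An atomic base is given by the set of atoms X such that c^X is in it. *)
Definition atomic_base := nat -> Prop.

(** proof-term w.r.t. the base Sb: every constant occurrence (at atom-binder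
    depth d) is c^X for a free atom X with c^X in Sb. *)
Fixpoint proofterm_at (Sb : atomic_base) (d : nat) (t : term) : Prop :=
  match t with
  | Var _ => True
  | Cst A => match A with Atom X => d <= X /\ Sb (X - d) | _ => False end
  | Lam t => proofterm_at Sb d t
  | App t s => proofterm_at Sb d t /\ proofterm_at Sb d s
  | TLam t => proofterm_at Sb (S d) t
  | TApp t _ => proofterm_at Sb d t
  end.

Definition proofterm (Sb : atomic_base) (t : term) : Prop := proofterm_at Sb 0 t.

Definition E_valid (Sb : atomic_base) (G : list form) (t : term) (A : form) : Prop :=
  proofterm Sb t /\ qE_valid G t A.

(* Main.v *)
Require Import Defs.
From Stdlib Require Import List Arith Lia.
Import ListNotations.

Lemma fren_ext : forall A f g, (forall n, f n = g n) -> fren f A = fren g A.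
Proof. induction A; intros r1 r2 H; simpl; f_equal; auto.
  apply IHA. intros [|n]; simpl; auto. Qed.

Lemma fren_comp : forall A f g, fren f (fren g A) = fren (fun n => f (g n)) A.
Proof. induction A; intros r1 r2; simpl; f_equal; auto.
  rewrite IHA. apply fren_ext. intros [|n]; reflexivity. Qed.

Lemma fren_id : forall A f, (forall n, f n = n) -> fren f A = A.
Proof. induction A; intros r1 H; simpl; f_equal; auto. apply IHA. intros [|n]; simpl; auto. Qed.

Lemma tren_ext : forall t f g, (forall n, f n = g n) -> tren f t = tren g t.
Proof. induction t; intros r1 r2 H; simpl; f_equal; auto using fren_ext.
  apply IHt. intros [|n]; simpl; auto. Qed.

Lemma tren_comp : forall t f g, tren f (tren g t) = tren (fun n => f (g n)) t.
Proof. induction t; intros r1 r2; simpl; f_equal; auto using fren_comp.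
  rewrite IHt. apply tren_ext. intros [|n]; reflexivity. Qed.

Lemma tren_id : forall t f, (forall n, f n = n) -> tren f t = t.
Proof. induction t; intros r1 H; simpl; f_equal; auto using fren_id. apply IHt. intros [|n]; simpl; auto. Qed.

Lemma vren_ext : forall t f g, (forall n, f n = g n) -> vren f t = vren g t.
Proof. induction t; intros r1 r2 H; simpl; f_equal; auto.
  apply IHt. intros [|n]; simpl; auto. Qed.

Lemma vren_comp : forall t f g, vren f (vren g t) = vren (fun n => f (g n)) t.
Proof. induction t; intros r1 r2; simpl; f_equal; auto.
  rewrite IHt. apply vren_ext. intros [|n]; reflexivity. Qed.

Lemma tren_vren : forall t f g, tren f (vren g t) = vren g (tren f t).
Proof. induction t; intros r1 r2; simpl; f_equal; auto. Qed.

Lemma tsub_ext : forall t s1 s2, (forall n, s1 n = s2 n) -> tsub s1 t = tsub s2 t.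
Proof. induction t; intros s1 s2 H; simpl; f_equal; auto.
  - apply IHt. intros [|n]; simpl; auto. rewrite H; auto.
  - apply IHt. intros n; rewrite H; auto. Qed.

Lemma tren_tsub : forall t f s, tren f (tsub s t) = tsub (fun n => tren f (s n)) (tren f t).
Proof. induction t; intros r1 s; simpl; f_equal; auto.
  - rewrite IHt. apply tsub_ext. intros [|n]; simpl; auto using tren_vren.
  - rewrite IHt. apply tsub_ext. intros n. rewrite !tren_comp. apply tren_ext. intros [|m]; reflexivity. Qed.

Lemma vren_tsub : forall t f s, vren f (tsub s t) = tsub (fun n => vren f (s n)) t.
Proof. induction t; intros r1 s; simpl; f_equal; auto.
  - rewrite IHt. apply tsub_ext. intros [|n]; simpl; auto.
    rewrite !vren_comp. apply vren_ext. intros [|m]; reflexivity.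
  - rewrite IHt. apply tsub_ext. intros n. symmetry; apply tren_vren. Qed.

Lemma tsub_vren : forall t f s, tsub s (vren f t) = tsub (fun n => s (f n)) t.
Proof. induction t; intros r1 s; simpl; f_equal; auto.
  - rewrite IHt. apply tsub_ext. intros [|n]; simpl; auto.
  - rewrite IHt. apply tsub_ext. reflexivity. Qed.

Lemma tsub_tsub : forall t s1 s2, tsub s2 (tsub s1 t) = tsub (fun n => tsub s2 (s1 n)) t.
Proof. induction t; intros s1 s2; simpl; f_equal; auto.
  - rewrite IHt. apply tsub_ext. intros [|n]; simpl; auto.
    rewrite tsub_vren, vren_tsub. apply tsub_ext. reflexivity.
  - rewrite IHt. apply tsub_ext. intros n. rewrite tren_tsub. reflexivity. Qed.

Lemma tsub_id : forall t s, (forall n, s n = Var n) -> tsub s t = t.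
Proof. induction t; intros s H; simpl; f_equal; auto.
  - apply IHt. intros [|n]; simpl; auto. rewrite H; auto.
  - apply IHt. intros n. rewrite H; auto. Qed.

Lemma E1 : forall b s sg,
  tsub (subst1 (tsub sg s)) (tsub (fun n => match n with 0 => Var 0 | S n => vren S (sg n) end) b)
  = tsub sg (tsub (subst1 s) b).
Proof. intros. rewrite !tsub_tsub. apply tsub_ext. intros [|n]; simpl; auto.
  rewrite tsub_vren. apply tsub_id. reflexivity. Qed.

Lemma E2 : forall b Y sg,
  tren (inst Y) (tsub (fun n => tren S (sg n)) b) = tsub sg (tren (inst Y) b).
Proof. intros. rewrite tren_tsub. apply tsub_ext. intros n. rewrite tren_comp.
  apply tren_id. reflexivity. Qed.

Lemma E3 : forall b s f, tren f (tsub (subst1 s) b) = tsub (subst1 (tren f s)) (tren f b).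
Proof. intros. rewrite tren_tsub. apply tsub_ext. intros [|n]; reflexivity. Qed.

Lemma E4 : forall b Y f, tren f (tren (inst Y) b) = tren (inst (f Y)) (tren (up f) b).
Proof. intros. rewrite !tren_comp. apply tren_ext. intros [|n]; reflexivity. Qed.

Lemma star_trans : forall a b c, star a b -> star b c -> star a c.
Proof. intros a b c H; induction H; intros; auto. econstructor; eauto. Qed.

Lemma star_cong : forall (F : term -> term), (forall a b, step a b -> step (F a) (F b)) ->
  forall a b, star a b -> star (F a) (F b).
Proof. intros F HF a b H; induction H. constructor. econstructor; eauto. Qed.

Definition inert (sg : nat -> term) := forall i, (exists j, sg i = Var j) \/ (exists C, sg i = Cst C).

Lemma inert_lam : forall sg, inert sg -> inert (fun n => match n with 0 => Var 0 | S n => vren S (sg n) end).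
Proof. intros sg H [|i]. left; eauto. destruct (H i) as [[j E]|[C E]]; rewrite E; simpl; eauto. Qed.

Lemma inert_tlam : forall sg, inert sg -> inert (fun n => tren S (sg n)).
Proof. intros sg H i. destruct (H i) as [[j E]|[C E]]; rewrite E; simpl; eauto. Qed.

Lemma step_tsub_inv : forall t sg u, inert sg -> step (tsub sg t) u -> exists t', step t t' /\ u = tsub sg t'.
Proof.
  induction t; intros sg u Hi Hs; simpl in Hs.
  - destruct (Hi n) as [[j E]|[C E]]; rewrite E in Hs; inversion Hs.
  - inversion Hs.
  - inversion Hs; subst. destruct (IHt _ _ (inert_lam _ Hi) H0) as [tq [H1 H2]].
    exists (Lam tq). split. constructor; auto. simpl. now rewrite H2.
  - remember (App (tsub sg t1) (tsub sg t2)) as x.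
    destruct Hs; try discriminate; injection Heqx; intros; subst.
    + destruct t1; simpl in *; try discriminate.
      * destruct (Hi n) as [[j E]|[C E]]; congruence.
      * injection H0; intros; subst. exists (tsub (subst1 t2) t1). split. constructor.
        apply E1.
    +  destruct (IHt1 _ _ Hi Hs) as [tq [H1 H2]]. exists (App tq t2); split.
      now constructor. simpl; now rewrite H2.
    + destruct (IHt2 _ _ Hi Hs) as [tq [H1 H2]]. exists (App t1 tq); split.
      now constructor. simpl; now rewrite H2.
  - inversion Hs; subst. destruct (IHt _ _ (inert_tlam _ Hi) H0) as [tq [H1 H2]].
    exists (TLam tq). split. constructor; auto. simpl. now rewrite H2.
  - remember (TApp (tsub sg t) n) as x.
    destruct Hs; try discriminate; injection Heqx; intros; subst.
    + destruct t; simpl in *; try discriminate.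
      * destruct (Hi n0) as [[j E]|[C E]]; congruence.
      * injection H0; intros; subst. exists (tren (inst n) t). split. constructor.
        apply E2.
    + destruct (IHt _ _ Hi Hs) as [tq [H1 H2]].
      exists (TApp tq n); split. now constructor. simpl; now rewrite H2.
Qed.

Lemma star_tsub_inv : forall sg, inert sg -> forall a u, star a u -> forall t, a = tsub sg t ->
  exists t', star t t' /\ u = tsub sg t'.
Proof. intros sg Hi a u H; induction H; intros t0 E; subst.
  - exists t0; split; auto. constructor.
  - destruct (step_tsub_inv _ _ _ Hi H) as [t1 [H1 H2]].
    destruct (IHstar _ H2) as [t2 [H3 H4]]. exists t2; split; auto. econstructor; eauto. Qed.

Lemma step_tren_inv : forall t f u, step (tren f t) u -> exists t', step t t' /\ u = tren f t'.
Proof.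
  induction t; intros rf u Hs; simpl in Hs.
  - inversion Hs.
  - inversion Hs.
  - inversion Hs; subst. destruct (IHt _ _ H0) as [tq [H1 H2]].
    exists (Lam tq). split. constructor; auto. simpl. now rewrite H2.
  - remember (App (tren rf t1) (tren rf t2)) as x.
    destruct Hs; try discriminate; injection Heqx; intros; subst.
    + destruct t1; simpl in *; try discriminate.
      injection H0; intros; subst. exists (tsub (subst1 t2) t1). split. constructor.
      symmetry; apply E3.
    + destruct (IHt1 _ _ Hs) as [tq [H1 H2]]. exists (App tq t2); split.
      now constructor. simpl; now rewrite H2.
    + destruct (IHt2 _ _ Hs) as [tq [H1 H2]]. exists (App t1 tq); split.
      now constructor. simpl; now rewrite H2.
  - inversion Hs; subst. destruct (IHt _ _ H0) as [tq [H1 H2]].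
    exists (TLam tq). split. constructor; auto. simpl. now rewrite H2.
  - remember (TApp (tren rf t) (rf n)) as x.
    destruct Hs; try discriminate; injection Heqx; intros; subst.
    + destruct t; simpl in *; try discriminate.
      injection H0; intros; subst. exists (tren (inst n) t). split. constructor.
      symmetry; apply E4.
    + destruct (IHt _ _ Hs) as [tq [H1 H2]].
      exists (TApp tq n); split. now constructor. simpl; now rewrite H2.
Qed.

Lemma star_tren_inv : forall f a u, star a u -> forall t, a = tren f t ->
  exists t', star t t' /\ u = tren f t'.
Proof. intros f a u H; induction H; intros t0 E; subst.
  - exists t0; split; auto. constructor.
  - destruct (step_tren_inv _ _ _ H) as [t1 [H1 H2]].
    destruct (IHstar _ H2) as [t2 [H3 H4]]. exists t2; split; auto. econstructor; eauto. Qed.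

Lemma normal_tsub_inv : forall t sg, inert sg -> normal (tsub sg t) -> normal t.
Proof. induction t; intros sg Hi H; simpl in *; auto.
  - eapply IHt; [apply inert_lam; eauto| eauto].
  - destruct H as [H1 [H2 H3]]. split; [|split; eauto].
    destruct t1; simpl in *; auto.
  - eapply IHt; [apply inert_tlam; eauto| eauto].
  - destruct H as [H1 H2]. split; [|eauto]. destruct t; simpl in *; auto.
Qed.

Lemma normal_tren_inv : forall t f, normal (tren f t) -> normal t.
Proof. induction t; intros rf H; simpl in *; eauto.
  - destruct H as [H1 [H2 H3]]. split; [|split; eauto]. destruct t1; simpl in *; auto.
  - destruct H as [H1 H2]. split; [|eauto]. destruct t; simpl in *; auto.
Qed.

Lemma dec_app : forall C x u, star x u -> forall t, x = App t (Cst C) ->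
  (exists t', star t t' /\ u = App t' (Cst C)) \/
  (exists b, star t (Lam b) /\ star (tsub (subst1 (Cst C)) b) u).
Proof. intros C x u H; induction H; intros t0 E; subst.
  - left. exists t0. split; auto. constructor.
  - inversion H; subst.
    + right. exists t. split. constructor. auto.
    + destruct (IHstar t' eq_refl) as [[t1 [H1 H2]]|[b [H1 H2]]].
      * left. exists t1; split; auto. econstructor; eauto.
      * right. exists b; split; auto. econstructor; eauto.
    + inversion H4.
Qed.

Lemma dec_tapp : forall Y x u, star x u -> forall t, x = TApp t Y ->
  (exists t', star t t' /\ u = TApp t' Y) \/
  (exists b, star t (TLam b) /\ star (tren (inst Y) b) u).
Proof. intros Y x u H; induction H; intros t0 E; subst.
  - left. exists t0. split; auto. constructor.
  - inversion H; subst.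
    + right. exists t. split. constructor. auto.
    + destruct (IHstar t' eq_refl) as [[t1 [H1 H2]]|[b [H1 H2]]].
      * left. exists t1; split; auto. econstructor; eauto.
      * right. exists b; split; auto. econstructor; eauto.
Qed.

Lemma typed_cst_iff : forall D C B, typed D (Cst C) B <-> B = C.
Proof. split; intros H. inversion H; auto. subst; constructor. Qed.
Lemma typed_var_iff : forall D j B, typed D (Var j) B <-> nth_error D j = Some B.
Proof. split; intros H. inversion H; auto. constructor; auto. Qed.

Lemma typed_tsub_inv : forall s D G sg A, inert sg ->
  (forall i B, typed D (sg i) B <-> nth_error G i = Some B) ->
  typed D (tsub sg s) A -> typed G s A.
Proof.
  induction s; intros D G sg T Hi Hg H; simpl in H.
  - constructor. apply Hg; auto.
  - inversion H; subst; constructor.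
  - inversion H; subst. constructor. eapply IHs; [apply inert_lam; eauto| |eauto].
    intros [|i] B0; simpl.
    + rewrite typed_var_iff; simpl; tauto.
    + rewrite <- Hg. destruct (Hi i) as [[j E]|[C E]]; rewrite E; simpl.
      * rewrite !typed_var_iff; simpl; tauto.
      * rewrite !typed_cst_iff; tauto.
  - inversion H; subst. econstructor; eauto.
  - inversion H; subst. constructor. eapply IHs; [apply inert_tlam; eauto| |eauto].
    intros i B0. rewrite nth_error_map.
    destruct (Hi i) as [[j E]|[C E]]; rewrite E; simpl.
    + rewrite typed_var_iff, nth_error_map.
      assert (nth_error D j = nth_error G i) as E2.
      { specialize (Hg i). rewrite E in Hg. setoid_rewrite typed_var_iff in Hg.
        destruct (nth_error D j) as [x|], (nth_error G i) as [y|]; auto;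
          first [specialize (Hg x) | specialize (Hg y)]; destruct Hg as [h1 h2];
          first [ specialize (h1 eq_refl) | specialize (h2 eq_refl)]; congruence. }
      rewrite E2. tauto.
    + rewrite typed_cst_iff. specialize (Hg i C). rewrite E, typed_cst_iff in Hg.
      rewrite (proj1 Hg eq_refl). simpl. split; intros; subst; congruence.
  - inversion H; subst. econstructor; eauto.
Qed.

Lemma typed_ren : forall D t T, typed D t T -> forall g,
  typed (map (fren g) D) (tren g t) (fren g T).
Proof. intros D t T H; induction H; intros g; simpl.
  - constructor. rewrite nth_error_map, H. reflexivity.
  - constructor.
  - constructor. apply IHtyped.
  - econstructor; eauto.
  - constructor. specialize (IHtyped (up g)). rewrite map_map in *.
    erewrite map_ext; [apply IHtyped|]. intros a; simpl. rewrite !fren_comp.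
    apply fren_ext. intros; reflexivity.
  - rewrite fren_comp. erewrite fren_ext.
    2:{ instantiate (1 := fun n => inst (g Y) (up g n)). intros [|n]; reflexivity. }
    rewrite <- fren_comp. constructor. apply IHtyped.
Qed.

Fixpoint fab (k : nat) (A : form) : Prop :=
  match A with Atom n => n < k | Imp A B => fab k A /\ fab k B | All A => fab (S k) A end.
Fixpoint tab (k : nat) (t : term) : Prop :=
  match t with
  | Var _ => True | Cst A => fab k A | Lam t => tab k t | App t s => tab k t /\ tab k s
  | TLam t => tab (S k) t | TApp t n => tab k t /\ n < k end.

Lemma fab_ren : forall A k k' f, fab k A -> (forall n, n < k -> f n < k') -> fab k' (fren f A).
Proof. induction A; intros k k' f H Hf; simpl in *; intuition eauto.
  eapply IHA; eauto. intros [|n] Hn; simpl; [lia|]. specialize (Hf n). lia. Qed.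

Lemma tab_ren : forall t k k' f, tab k t -> (forall n, n < k -> f n < k') -> tab k' (tren f t).
Proof. induction t; intros k k' rf H Hf; simpl in *; intuition eauto using fab_ren.
  eapply IHt; eauto. intros [|n] Hn; simpl; [lia|]. specialize (Hf n). lia. Qed.

Lemma tab_vren : forall t k f, tab k t -> tab k (vren f t).
Proof. induction t; intros k rf H; simpl in *; intuition eauto. Qed.

Lemma tab_tsub : forall t k sg, tab k t -> (forall n, tab k (sg n)) -> tab k (tsub sg t).
Proof. induction t; intros k sg H Hs; simpl in *; intuition eauto.
  - apply IHt; auto. intros [|n]; simpl; auto using tab_vren.
  - apply IHt; auto. intros n. eapply tab_ren; eauto. intros; lia. Qed.

Lemma tab_step : forall t u, step t u -> forall k, tab k t -> tab k (tsub (fun n => Var n) u) -> True.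
Proof. auto. Qed.

Lemma tab_step' : forall t u, step t u -> forall k, tab k t -> tab k u.
Proof. intros t u H; induction H; intros k Hk; simpl in *; intuition eauto.
  - apply tab_tsub; auto. intros [|n]; simpl; auto.
  - eapply tab_ren; eauto. intros [|n] Hn; simpl; lia. Qed.

Lemma tab_star : forall t u, star t u -> forall k, tab k t -> tab k u.
Proof. intros t u H; induction H; eauto using tab_step'. Qed.

Lemma fab_mono : forall A k k', fab k A -> k <= k' -> fab k' A.
Proof. induction A; intros k k' H Hk; simpl in *; intuition eauto. lia. eapply IHA; eauto; lia. Qed.
Lemma tab_mono : forall t k k', tab k t -> k <= k' -> tab k' t.
Proof. induction t; intros k k' H Hk; simpl in *; intuition eauto using fab_mono. eapply IHt; eauto; lia. lia. Qed.

Lemma fab_ex : forall A, exists k, fab k A.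
Proof. induction A; simpl.
  - exists (S n); lia.
  - destruct IHA1 as [k1 H1], IHA2 as [k2 H2]. exists (max k1 k2).
    split; eapply fab_mono; eauto; lia.
  - destruct IHA as [k H]. exists k. eapply fab_mono; eauto. Qed.
Lemma tab_ex : forall t, exists k, tab k t.
Proof. induction t; simpl.
  - exists 0; auto.
  - apply fab_ex.
  - auto.
  - destruct IHt1 as [k1 H1], IHt2 as [k2 H2]. exists (max k1 k2).
    split; eapply tab_mono; eauto; lia.
  - destruct IHt as [k H]. exists k. eapply tab_mono; eauto.
  - destruct IHt as [k H]. exists (max k (S n)). split. eapply tab_mono; eauto; lia. lia. Qed.

Lemma fren_ext_b : forall A k f g, fab k A -> (forall n, n < k -> f n = g n) -> fren f A = fren g A.
Proof. induction A; intros k f g H Hf; simpl in *; f_equal; intuition eauto.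
  eapply IHA; eauto. intros [|n] Hn; simpl; auto. f_equal. apply Hf. lia. Qed.
Lemma tren_ext_b : forall t k f g, tab k t -> (forall n, n < k -> f n = g n) -> tren f t = tren g t.
Proof. induction t; intros k rf g H Hf; simpl in *; f_equal; intuition eauto using fren_ext_b.
  eapply IHt; eauto. intros [|n] Hn; simpl; auto. f_equal. apply Hf. lia. Qed.

Definition ginv (K : nat) (n : nat) : nat :=
  if n <? K then S n else if n =? K then 0 else n.

Lemma ginv_inst : forall K n, n < S K -> ginv K (inst K n) = n.
Proof. intros K [|n] H; unfold ginv; simpl.
  - rewrite Nat.ltb_irrefl, Nat.eqb_refl. auto.
  - assert (n < K) by lia. apply Nat.ltb_lt in H0. rewrite H0; auto. Qed.

Lemma fren_ginv : forall A K, fab (S K) A -> fren (ginv K) (fren (inst K) A) = A.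
Proof. intros. rewrite fren_comp. rewrite (fren_ext_b A (S K) _ (fun n => n)).
  apply fren_id; auto. auto. intros n Hn. apply ginv_inst; auto. Qed.
Lemma tren_ginv : forall t K, tab (S K) t -> tren (ginv K) (tren (inst K) t) = t.
Proof. intros. rewrite tren_comp. rewrite (tren_ext_b t (S K) _ (fun n => n)).
  apply tren_id; auto. auto. intros n Hn. apply ginv_inst; auto. Qed.

Lemma neutral_bound : forall t K T, normal t ->
  match t with Lam _ | TLam _ => False | _ => True end ->
  tab K t -> typed nil t T -> fab K T.
Proof. induction t; intros K T Hn Hne Hb Ht; simpl in *.
  - inversion Ht; subst. destruct n; discriminate.
  - inversion Ht; subst; auto.
  - contradiction.
  - inversion Ht; subst. destruct Hn as [Hn1 [Hn2 Hn3]].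
    assert (fab K (Imp A T)). { apply IHt1; auto. destruct t1; auto. inversion H2. tauto. }
    simpl in H; tauto.
  - contradiction.
  - inversion Ht; subst. destruct Hn as [Hn1 Hn2].
    assert (fab K (All A)). { apply IHt; auto. destruct t; auto. inversion H3. tauto. }
    simpl in H. eapply fab_ren; eauto. intros [|m] Hm; simpl; lia.
Qed.

Lemma pt_vren : forall Sb t d f, proofterm_at Sb d t -> proofterm_at Sb d (vren f t).
Proof. induction t; intros d rf H; simpl in *; intuition eauto. Qed.

Lemma pt_tren : forall Sb t d d' f, proofterm_at Sb d t ->
  (forall X, d <= X -> d' <= f X /\ f X - d' = X - d) -> proofterm_at Sb d' (tren f t).
Proof. induction t; intros d d' rf H Hf; simpl in *; intuition eauto.
  - destruct f; try contradiction. simpl. destruct H as [H1 H2].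
    destruct (Hf n H1) as [H3 H4]. rewrite H4. auto.
  - eapply IHt; eauto. intros [|X] HX; simpl; [lia|]. destruct (Hf X) as [H3 H4]; lia. Qed.

Lemma pt_tsub : forall Sb t d sg, proofterm_at Sb d t -> (forall n, proofterm_at Sb d (sg n)) ->
  proofterm_at Sb d (tsub sg t).
Proof. induction t; intros d sg H Hs; simpl in *; intuition eauto.
  - apply IHt; auto. intros [|n]; simpl; auto using pt_vren.
  - apply IHt; auto. intros n. eapply pt_tren; eauto. intros; lia. Qed.

Lemma pt_step : forall Sb t u, step t u -> forall d, proofterm_at Sb d t -> proofterm_at Sb d u.
Proof. intros Sb t u H; induction H; intros d Hd; simpl in *; intuition eauto.
  - apply pt_tsub; auto. intros [|n]; simpl; auto.
  - eapply pt_tren; eauto. intros [|X] HX; simpl; lia. Qed.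

Lemma pt_star : forall Sb t u, star t u -> forall d, proofterm_at Sb d t -> proofterm_at Sb d u.
Proof. intros Sb t u H; induction H; eauto using pt_step. Qed.

Lemma qev_closed : forall A rho t, qev A rho t -> closed t.
Proof. destruct A; simpl; tauto. Qed.

Lemma fren_scons : forall A Y rho, fren (scons Y rho) A = fren (inst Y) (fren (up rho) A).
Proof. intros. rewrite fren_comp. apply fren_ext. intros [|n]; reflexivity. Qed.

Definition neutral (t : term) : Prop := match t with Lam _ | TLam _ => False | _ => True end.

Lemma CR : forall A,
  (forall rho t, qev A rho t -> exists s, star t s /\ normal s /\ typed nil s (fren rho A)) /\
  (forall rho t n, closed t -> star t n -> normal n -> neutral n -> typed nil n (fren rho A) ->
     qev A rho t).
Proof.
  induction A as [X|A [A1 A2] B [B1 B2]|A IHA].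
  - split.
    + intros rho t [_ [s [H1 [H2 H3]]]]. exists s; auto.
    + intros rho t n Hc Hs Hn Hne Ht. split; auto. exists n; auto.
  - split.
    + intros rho t [Hc H].
      set (c := Cst (fren rho A)).
      assert (Hcv : qev A rho c).
      { apply A2 with (n := c); unfold closed, c; simpl; auto; constructor. }
      destruct (B1 rho _ (H c Hcv)) as [u [U1 [U2 U3]]].
      destruct (dec_app _ _ _ U1 t eq_refl) as [[t' [T1 ->]]|[b [T1 T2]]].
      * exists t'. simpl in U2. destruct U2 as [U2a [U2b _]].
        inversion U3; subst. inversion H5; subst. simpl. auto.
      * assert (Hi : inert (subst1 c)).
        { intros [|i]; simpl; [right; unfold c; eauto| left; eauto]. }
        destruct (star_tsub_inv _ Hi _ _ T2 b eq_refl) as [b' [V1 ->]].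
        exists (Lam b'). split; [|split].
        -- eapply star_trans; [exact T1|]. apply star_cong; auto. intros; constructor; auto.
        -- simpl. eapply normal_tsub_inv; eauto.
        -- simpl. constructor. eapply typed_tsub_inv; eauto.
           intros [|i] B0; simpl.
           ++ unfold c. rewrite typed_cst_iff. split; congruence.
           ++ rewrite typed_var_iff. destruct i; simpl; split; discriminate.
    + intros rho t n Hc Hs Hn Hne Ht. split; auto. intros s Hs'.
      destruct (A1 rho s Hs') as [s' [S1 [S2 S3]]].
      apply B2 with (n := App n s').
      * unfold closed; simpl; split; auto. apply (qev_closed _ _ _ Hs').
      * eapply star_trans.
        -- apply (star_cong (fun x => App x s)); [intros; constructor; auto|exact Hs].
        -- apply (star_cong (fun x => App n x)); [intros; constructor; auto|exact S1].
      * simpl. split; auto. destruct n; auto.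
      * simpl; auto.
      * simpl in Ht. econstructor; eauto.
  - split.
    + intros rho t [Hc H].
      set (A' := fren (up rho) A).
      destruct (tab_ex t) as [K1 HK1]. destruct (fab_ex (All A')) as [K2 HK2].
      set (K := max K1 K2).
      assert (HtK : tab K t) by (eapply tab_mono; eauto; lia).
      assert (HAK : fab (S K) A') by (eapply fab_mono; eauto; simpl; lia).
      destruct (proj1 IHA (scons K rho) _ (H K)) as [u [U1 [U2 U3]]].
      rewrite fren_scons in U3. fold A' in U3.
      destruct (dec_tapp _ _ _ U1 t eq_refl) as [[t' [T1 ->]]|[b [T1 T2]]].
      * exists t'. simpl in U2. destruct U2 as [U2a U2b].
        inversion U3; subst.
        assert (Hne : neutral t'). { destruct t'; simpl; auto; match goal with H0 : typed _ _ (All _) |- _ => inversion H0 end. }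
        assert (fab K (All A0)).
        { eapply neutral_bound; eauto. eapply tab_star; eauto. }
        assert (A0 = A').
        { rewrite <- (fren_ginv A0 K), <- (fren_ginv A' K); auto. congruence. }
        subst. simpl. auto.
      * destruct (star_tren_inv _ _ _ T2 b eq_refl) as [b' [V1 ->]].
        assert (Hb : tab (S K) b').
        { eapply tab_star; eauto. apply (tab_star _ _ T1 K HtK). }
        exists (TLam b'). split; [|split].
        -- eapply star_trans; [exact T1|]. apply star_cong; auto. intros; constructor; auto.
        -- simpl. eapply normal_tren_inv; eauto.
        -- simpl. constructor. simpl.
           pose proof (typed_ren _ _ _ U3 (ginv K)) as W. simpl in W.
           rewrite tren_ginv, fren_ginv in W; auto.
    + intros rho t n Hc Hs Hn Hne Ht. split; auto. intros Y.
      apply (proj2 IHA (scons Y rho)) with (n := TApp n Y).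
      * unfold closed in *; simpl; auto.
      * apply (star_cong (fun x => TApp x Y)); [intros; constructor; auto|exact Hs].
      * simpl. split; auto. destruct n; auto.
      * simpl; auto.
      * rewrite fren_scons. simpl in Ht. constructor; auto.
Qed.

Theorem mainTheorem1 :
  forall (Sb : atomic_base) (G : list form) (t : term) (A : form),
    fvbound (length G) t ->
    E_valid Sb G t A ->
    exists s : term,
      proofterm Sb s /\ normal s /\ star t s /\ typed G s A.
Proof.
  intros Sb G t A _ [Hpt [_ Hq]].
  set (sg := fun i => match nth_error G i with Some B => Cst B | None => Var i end).
  assert (Hs : forall i Ai, nth_error G i = Some Ai -> qE_valid_closed Ai (sg i)).
  { intros i Ai E. unfold qE_valid_closed, sg. rewrite E.
    apply (proj2 (CR Ai)) with (n := Cst Ai); simpl; auto.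
    unfold closed; simpl; auto. constructor. rewrite fren_id; auto. constructor. }
  specialize (Hq sg Hs). unfold qE_valid_closed in Hq.
  destruct (proj1 (CR A) _ _ Hq) as [u [U1 [U2 U3]]].
  rewrite fren_id in U3; auto.
  assert (Hi : inert sg). { intros i; unfold sg; destruct (nth_error G i); eauto. }
  destruct (star_tsub_inv _ Hi _ _ U1 t eq_refl) as [t' [V1 ->]].
  exists t'. split; [|split; [|split]].
  - eapply pt_star; eauto.
  - eapply normal_tsub_inv; eauto.
  - auto.
  - eapply typed_tsub_inv; eauto. intros i B; unfold sg.
    destruct (nth_error G i).
    + rewrite typed_cst_iff. split; congruence.
    + rewrite typed_var_iff. destruct i; simpl; split; discriminate.
Qed.
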